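(* For any graph function $\alpha$ on a strongly connected digraph $G$, we have $\rho^R/2\le h$, where $\rho^R=\max_v\rho^R_v$ and $h=\max_v y_v-\min_v y_v$.
   Context: $G$ is a strongly connected directed graph on vertex set $\{1,\dots,n\}$ (self-loops allowed); a graph function assigns a real weight $\alpha_{uv}$ to each edge. $\alpha_v^{\text{in}}=\max_{u:(u,v)\in G}\alpha_{uv}$, $\alpha_v^{\text{out}}=\max_{w:(v,w)\in G}\alpha_{vw}$, $\rho^R_v=\max\{0,\alpha_v^{\text{out}}-\alpha_v^{\text{in}}\}$. A raising operation at $v$: if $\rho^R_v>0$ add $\rho^R_v/2$ to each incoming edge weight $\alpha_{uv}$ ($u\ne v$) and subtract it from each outgoing $\alpha_{vw}$ ($w\neq v$); otherwise do nothing. Starting from $\alpha$, for any infinite sequence of raising operations in which every vertex occurs infinitely often, the cumulative amount $r_v(t)$ by which each vertex has been raised (sum of the increments $\rho^R_v/2$ over operations at $v$) converges to a limit vector $r^*$ that does not depend on the sequence. The heights are $y_v=-r^*_v$. *)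

(* Defs.v *)
From HB Require Import structures.
From mathcomp Require Import all_boot all_order all_algebra.
From mathcomp Require Import all_classical all_reals all_analysis.
Set Implicit Arguments. Unset Strict Implicit. Unset Printing Implicit Defensive.
Import Order.TTheory GRing.Theory Num.Theory.
Local Open Scope ring_scope.

Section Raising.
Variable R : realType.
Variable n : nat.
(* Directed graph on vertices 'I_n (= {1..n} shifted); E u v means (u,v) is an edge. *)
Variable E : rel 'I_n.

(* maximum / minimum of a finite list of reals; 0 by convention if empty *)
Definition maxs (s : seq R) : R :=
  match s with [::] => 0 | x :: s' => foldr Num.max x s' end.
Definition mins (s : seq R) : R :=
  match s with [::] => 0 | x :: s' => foldr Num.min x s' end.

(* a graph function: weight alpha u v on edge (u,v) (values off edges are irrelevant) *)
Definition alpha_in (alpha : 'I_n -> 'I_n -> R) (v : 'I_n) : R :=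
  maxs [seq alpha u v | u <- enum 'I_n & E u v].
Definition alpha_out (alpha : 'I_n -> 'I_n -> R) (v : 'I_n) : R :=
  maxs [seq alpha v w | w <- enum 'I_n & E v w].
Definition rhoR (alpha : 'I_n -> 'I_n -> R) (v : 'I_n) : R :=
  Num.max 0 (alpha_out alpha v - alpha_in alpha v).

Definition raise (alpha : 'I_n -> 'I_n -> R) (v : 'I_n) : 'I_n -> 'I_n -> R :=
  fun a b =>
    if E a b then
      if (b == v) && (a != v) then alpha a b + rhoR alpha v / 2
      else if (a == v) && (b != v) then alpha a b - rhoR alpha v / 2
      else alpha a b
    else alpha a b.

Fixpoint alpha_at (alpha : 'I_n -> 'I_n -> R) (s : nat -> 'I_n) (t : nat)
  : 'I_n -> 'I_n -> R :=
  match t with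
  | 0 => alpha
  | t'.+1 => raise (alpha_at alpha s t') (s t')
  end.

Definition rcum (alpha : 'I_n -> 'I_n -> R) (s : nat -> 'I_n) (t : nat) (v : 'I_n) : R :=
  \sum_(k < t | s k == v) rhoR (alpha_at alpha s k) v / 2.

End Raising.

Definition strongly_connected (n : nat) (E : rel 'I_n) : Prop :=
  forall u v : 'I_n, connect E u v.

Definition fair (n : nat) (s : nat -> 'I_n) : Prop :=
  forall (v : 'I_n) (N : nat), exists k : nat, (N <= k)%N /\ s k = v.

(* Main.v *)
Require Import Defs.
From HB Require Import structures.
From mathcomp Require Import all_boot all_order all_algebra.
From mathcomp Require Import all_classical all_reals all_analysis.
From mathcomp Require Import lra.
Import Order.TTheory GRing.Theory Num.Theory numFieldNormedType.Exports.
Local Open Scope classical_set_scope.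
Local Open Scope ring_scope.

Section Helpers.
Variable R : realType.

Lemma foldr_max_ge (s : seq R) a :
  a <= foldr Num.max a s /\ forall x, x \in s -> x <= foldr Num.max a s.
Proof.
elim: s => [|b s [IH1 IH2]] /=; first by split=> // x.
split; first by rewrite le_max IH1 orbT.
move=> x; rewrite inE => /orP [/eqP -> | xs]; first by rewrite le_max lexx.
by rewrite le_max IH2 ?orbT.
Qed.

Lemma foldr_max_le (s : seq R) a b :
  a <= b -> (forall x, x \in s -> x <= b) -> foldr Num.max a s <= b.
Proof.
elim: s => [|c s IH] //= ab H.
rewrite ge_max H ?mem_head //= IH // => x xs; apply: H; by rewrite inE xs orbT.
Qed.

Lemma foldr_min_le (s : seq R) a :
  foldr Num.min a s <= a /\ forall x, x \in s -> foldr Num.min a s <= x.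
Proof.
elim: s => [|b s [IH1 IH2]] /=; first by split=> // x.
split; first by rewrite ge_min IH1 orbT.
move=> x; rewrite inE => /orP [/eqP -> | xs]; first by rewrite ge_min lexx.
by rewrite ge_min IH2 ?orbT.
Qed.

Lemma maxs_ge (s : seq R) x : x \in s -> x <= maxs s.
Proof.
case: s => [|a s] //=; rewrite inE => /orP [/eqP -> | xs].
  by case: (foldr_max_ge s a).
by case: (foldr_max_ge s a) => _; apply.
Qed.

Lemma mins_le (s : seq R) x : x \in s -> mins s <= x.
Proof.
case: s => [|a s] //=; rewrite inE => /orP [/eqP -> | xs].
  by case: (foldr_min_le s a).
by case: (foldr_min_le s a) => _; apply.
Qed.

Lemma maxs_le (s : seq R) b : s != [::] -> (forall x, x \in s -> x <= b) -> maxs s <= b.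
Proof.
case: s => [|a s] //= _ H; apply: foldr_max_le; first exact/H/mem_head.
by move=> x xs; apply: H; rewrite inE xs orbT.
Qed.

Lemma maxs_mono (T : eqType) (s : seq T) (f g : T -> R) d : 0 <= d ->
  (forall i, i \in s -> f i <= g i + d) -> maxs (map f s) <= maxs (map g s) + d.
Proof.
case: s => [|a s] d0 H; first by rewrite /= add0r.
apply: maxs_le => // x /mapP [i iS ->].
apply: le_trans (H i iS) _; rewrite lerD2r; apply: maxs_ge; exact: map_f.
Qed.

End Helpers.

Section Graph.
Variable R : realType.
Variable n : nat.
Variable E : rel 'I_n.

Lemma rho_shift (alpha beta : 'I_n -> 'I_n -> R) d v : 0 <= d ->
  (forall a b, E a b -> alpha a b <= beta a b + d /\ beta a b <= alpha a b + d) ->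
  rhoR E alpha v <= rhoR E beta v + 2 * d.
Proof.
move=> d0 H.
have Ho : alpha_out E alpha v <= alpha_out E beta v + d.
  rewrite /alpha_out; apply: maxs_mono => // w.
  by rewrite mem_filter => /andP [/H [] + _].
have Hi : alpha_in E beta v <= alpha_in E alpha v + d.
  rewrite /alpha_in; apply: maxs_mono => // w.
  by rewrite mem_filter => /andP [/H [] _ +].
rewrite /rhoR.
set x := alpha_out E beta v - alpha_in E beta v.
have H1 : 0 <= Num.max 0 x by rewrite le_max lexx.
have H2 : x <= Num.max 0 x by rewrite le_max lexx orbT.
rewrite ge_max; apply/andP; split; rewrite /x in H2; lra.
Qed.

Variable alpha : 'I_n -> 'I_n -> R.
Variable s : nat -> 'I_n.

Lemma rcum_S t v : rcum E alpha s t.+1 v =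
  rcum E alpha s t v + (if s t == v then rhoR E (alpha_at E alpha s t) v / 2 else 0).
Proof. by rewrite /rcum big_mkcond /= big_ord_recr /= -big_mkcond. Qed.

Lemma alpha_at_eq t a b : alpha_at E alpha s t a b =
  alpha a b + (if E a b && (a != b) then rcum E alpha s t b - rcum E alpha s t a else 0).
Proof.
elim: t => [|t IH].
  by rewrite /= /rcum !big_ord0 subrr; case: ifP => _; rewrite addr0.
rewrite /= /raise !rcum_S IH.
case Eab: (E a b) => /=; last by rewrite addr0.
set rho := rhoR E (alpha_at E alpha s t) (s t).
case: (eqVneq a b) => [<-|ab] /=.
  rewrite andbN; case: (a == s t) => /=; rewrite ?andbF ?andbT ?addr0 // ; lra.
case: (eqVneq b (s t)) => [bv|bv] /=; case: (eqVneq a (s t)) => [av|av] /=.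
- by rewrite -bv in av; rewrite av eqxx in ab.
- rewrite /rho -bv; lra.
- rewrite /rho -av; lra.
- lra.
Qed.

End Graph.

Theorem proposition2 (R : realType) (n : nat) (E : rel 'I_n)
  (alpha : 'I_n -> 'I_n -> R) (s : nat -> 'I_n) (rstar : 'I_n -> R) :
  strongly_connected E ->
  fair s ->
  (forall v : 'I_n, (fun t : nat => rcum E alpha s t v) @ \oo --> (rstar v)) ->
  let y := fun v : 'I_n => - rstar v in
  maxs [seq rhoR E alpha v | v <- enum 'I_n] / 2 <=
    maxs [seq y v | v <- enum 'I_n] - mins [seq y v | v <- enum 'I_n].
Proof.
move=> _ Hfair Hcv; pose y := fun v : 'I_n => - rstar v.
change (maxs [seq rhoR E alpha v | v <- enum 'I_n] / 2 <=
    maxs [seq y v | v <- enum 'I_n] - mins [seq y v | v <- enum 'I_n]).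
set D := _ - _.
have HD : forall u w, rstar w - rstar u <= D.
  move=> u w; rewrite /D.
  have := @maxs_ge R _ _ (map_f y (mem_enum 'I_n u)).
  have := @mins_le R _ _ (map_f y (mem_enum 'I_n w)).
  rewrite /y; lra.
pose astar a b := alpha a b + (if E a b && (a != b) then rstar b - rstar a else 0).
have Hstar : forall v, rhoR E astar v <= 0.
  move=> v.
  have Heps : forall e : R, 0 < e -> rhoR E astar v < 8 * e.
    move=> e e0.
    have Hn : \forall t \near \oo, forall u, `|rstar u - rcum E alpha s t u| < e.
      apply: filter_forall => u.
      by move/cvgrPdist_lt: (Hcv u) => /(_ e e0).
    case: Hn => N _ HN.
    have [k [Nk skv]] := Hfair v N.
    have Hk := HN k Nk.
    have Hk1 := HN k.+1 (leqW Nk).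
    have Hrho : rhoR E (alpha_at E alpha s k) v / 2 < 2 * e.
      have := Hk v; have := Hk1 v.
      rewrite rcum_S skv eqxx !ltr_norml; lra.
    have Hsh := @rho_shift R n E astar (alpha_at E alpha s k) (2 * e) v.
    have : rhoR E astar v <= rhoR E (alpha_at E alpha s k) v + 2 * (2 * e).
      apply: Hsh; first lra.
      move=> a b Eab; rewrite /astar alpha_at_eq Eab /=.
      case: (a != b) => /=; last by rewrite !addr0; lra.
      have := Hk a; have := Hk b; rewrite !ltr_norml; lra.
    lra.
  rewrite leNgt; apply/negP => hpos.
  have := Heps (rhoR E astar v / 16) ltac:(lra); lra.
case En: (enum 'I_n) => [|v0 l].
  by rewrite /D En /= mul0r subrr.
have D0 : 0 <= D by have := HD v0 v0; rewrite subrr.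
rewrite ler_pdivrMr //; apply: maxs_le; first by [].
move=> x; rewrite -En => /mapP [v _ ->].
have := @rho_shift R n E alpha astar D v D0.
have := Hstar v.
suff : (forall a b : 'I_n, E a b -> alpha a b <= astar a b + D /\ astar a b <= alpha a b + D).
  by move=> H1 H2 /(_ H1); lra.
move=> a b Eab; rewrite /astar Eab /=.
case: (a != b) => /=; last by rewrite addr0; lra.
have := HD a b; have := HD b a; lra.
Qed.
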